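(* Let $g(x)=1-(1-x^2)^4$ for $|x|\le1$ and $g(x)=1$ otherwise. For $p_o\in]0,\sqrt2[$ let $\mathcal{T}(p_o)$ be the smallest period of the (periodic) function $q$, where $(q,p)$ is the global solution of $\dot q=p$, $\dot p=-g'(q)$ with $(q(0),p(0))=(0,p_o)$. Then: (i) $\mathcal{T}$ is continuous on $]0,\sqrt2[$; (ii) $\mathcal{T}$ is strictly increasing; (iii) $\inf_{p_o\in]0,\sqrt2[}\mathcal{T}(p_o)=\pi/\sqrt2$; (iv) $\lim_{p_o\to\sqrt2}\mathcal{T}(p_o)=+\infty$. *)

(* Defs.v *)
From Stdlib Require Import Reals.
From Coquelicot Require Import Coquelicot.
Open Scope R_scope.

Definition g (x : R) : R :=
  if Rle_dec (Rabs x) 1 then 1 - (1 - x ^ 2) ^ 4 else 1.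

Definition is_global_solution (po : R) (q p : R -> R) : Prop :=
  (forall t : R, is_derive q t (p t)) /\
  (forall t : R, is_derive p t (- Derive g (q t))) /\
  q 0 = 0 /\ p 0 = po.

Definition is_period (f : R -> R) (T : R) : Prop :=
  forall t : R, f (t + T) = f t.

Definition is_min_period (f : R -> R) (T : R) : Prop :=
  0 < T /\ is_period f T /\ (forall T' : R, 0 < T' < T -> ~ is_period f T').

(* Main.v *)
Require Import Defs.
From Stdlib Require Import Reals Lra Psatz.
From Coquelicot Require Import Coquelicot.
Open Scope R_scope.

Definition gd (x : R) : R := 8 * x * (Rmax 0 (1 - x^2))^3.

Lemma g_alt x : g x = 1 - (Rmax 0 (1 - x^2))^4.
Proof.
  unfold g. destruct (Rle_dec (Rabs x) 1) as [H|H].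
  - apply Rabs_le_between in H.
    rewrite Rmax_right; [reflexivity|nra].
  - assert (1 < Rabs x) by lra.
    assert (1 < x^2).
    { rewrite <- (pow2_abs x). nra. }
    rewrite Rmax_left; [ring|lra].
Qed.

Lemma m4_deriv y : is_derive (fun y => (Rmax 0 y)^4) y (4 * (Rmax 0 y)^3).
Proof.
  destruct (Rlt_or_le 0 y) as [H|H].
  - rewrite Rmax_right by lra.
    apply is_derive_ext_loc with (fun y => y^4).
    + apply locally_interval with 0 p_infty; simpl; auto.
      intros z Hz _. rewrite Rmax_right by lra. reflexivity.
    + auto_derive; auto. ring.
  - destruct H as [H|H].
    + rewrite Rmax_left by lra.
      apply is_derive_ext_loc with (fun _ => 0).
      * apply locally_interval with m_infty 0; simpl; auto.
        intros z _ Hz. rewrite Rmax_left by lra. ring.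
      * replace (4 * 0^3) with 0 by ring. auto_derive; auto.
    + subst y. rewrite Rmax_left by lra. replace (4 * 0^3) with 0 by ring.
      apply is_derive_Reals. intros eps Heps.
      exists (mkposreal (Rmin 1 eps) (Rmin_pos _ _ Rlt_0_1 Heps)).
      intros h Hh0 Hh. simpl in Hh.
      rewrite Rplus_0_l. rewrite (Rmax_left 0 0) by lra.
      assert (Hm1 : Rabs h < 1) by (eapply Rlt_le_trans; [exact Hh| apply Rmin_l]).
      assert (Hme : Rabs h < eps) by (eapply Rlt_le_trans; [exact Hh| apply Rmin_r]).
      apply Rabs_def2 in Hm1. apply Rabs_def2 in Hme.
      destruct (Rlt_or_le 0 h) as [Hp|Hp].
      * rewrite Rmax_right by lra.
        replace ((h^4 - 0^4)/h - 0) with (h^3) by (field; lra).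
        rewrite Rabs_right by (apply Rle_ge; apply pow_le; lra).
        nra.
      * rewrite Rmax_left by lra.
        replace ((0^4 - 0^4)/h - 0) with 0 by (field; lra).
        rewrite Rabs_R0; lra.
Qed.

Lemma g_deriv x : is_derive g x (gd x).
Proof.
  apply is_derive_ext with (fun x => 1 - (Rmax 0 (1 - x^2))^4).
  { intro t. symmetry. apply g_alt. }
  unfold gd.
  assert (Hc : is_derive (fun x => (Rmax 0 (1 - x^2))^4) x (scal (-2 * x) (4 * (Rmax 0 (1-x^2))^3))).
  { apply (is_derive_comp (fun y => (Rmax 0 y)^4) (fun x => 1 - x^2)).
    - apply m4_deriv.
    - auto_derive; auto; ring. }
  replace (8 * x * Rmax 0 (1 - x ^ 2) ^ 3) with (minus zero (scal (-2 * x) (4 * (Rmax 0 (1-x^2))^3))).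
  2:{ unfold minus, plus, opp, zero, scal; simpl. unfold mult; simpl. ring. }
  apply (is_derive_minus (fun _ => 1) _ x zero _ (is_derive_const 1 x) Hc).
Qed.

Lemma Derive_g x : Derive g x = gd x.
Proof. apply is_derive_unique, g_deriv. Qed.

Lemma cont_of_ex_derive (f : R -> R) x : ex_derive f x -> continuity_pt f x.
Proof.
  intros H. apply continuity_pt_filterlim.
  exact (@ex_derive_continuous R_AbsRing R_NormedModule f x H).
Qed.

Definition kp (x : R) := 8 * x * (1 - x^2)^3.
Definition clamp (x : R) := Rmax (-1) (Rmin 1 x).

Lemma gd_clamp x : gd x = kp (clamp x).
Proof.
  unfold gd, kp, clamp.
  destruct (Rle_lt_dec x 1); destruct (Rle_lt_dec (-1) x).
  - rewrite (Rmin_right 1 x) by lra. rewrite (Rmax_right (-1) x) by lra.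
    rewrite Rmax_right by nra. reflexivity.
  - rewrite (Rmin_right 1 x) by lra. rewrite (Rmax_left (-1) x) by lra.
    rewrite Rmax_left by nra. ring.
  - rewrite (Rmin_left 1 x) by lra. rewrite (Rmax_right (-1) 1) by lra.
    rewrite Rmax_left by nra. ring.
  - lra.
Qed.

Lemma clamp_lip x y : Rabs (clamp x - clamp y) <= Rabs (x - y).
Proof.
  unfold clamp. unfold Rmax, Rmin.
  repeat destruct Rle_dec; repeat destruct Rle_dec; unfold Rabs; repeat destruct Rcase_abs; lra.
Qed.

Lemma clamp_range x : -1 <= clamp x <= 1.
Proof. unfold clamp, Rmax, Rmin. repeat destruct Rle_dec; lra. Qed.

Lemma kp_lip a b : -1 <= a <= 1 -> -1 <= b <= 1 -> Rabs (kp a - kp b) <= 48 * Rabs (a - b).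
Proof.
  intros Ha Hb.
  destruct (MVT_gen kp b a (fun x => 8 * (1 - x^2)^2 * (1 - 7 * x^2))) as [c [Hc Heq]].
  - intros x _. unfold kp. auto_derive; auto. ring.
  - intros x _. apply cont_of_ex_derive.
    unfold kp. auto_derive. auto.
  - rewrite Heq. rewrite Rabs_mult. apply Rmult_le_compat_r; [apply Rabs_pos|].
    assert (-1 <= c <= 1).
    { unfold Rmin, Rmax in Hc. destruct Rle_dec; lra. }
    assert (0 <= c^2 <= 1) by nra.
    set (s := c^2) in *.
    assert (0 <= (1 - s)^2 <= 1) by nra.
    apply Rabs_le. split; nra.
Qed.

Lemma gd_lip x y : Rabs (gd x - gd y) <= 48 * Rabs (x - y).
Proof.
  rewrite !gd_clamp.
  eapply Rle_trans; [apply kp_lip; apply clamp_range|].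
  apply Rmult_le_compat_l; [lra|apply clamp_lip].
Qed.


Lemma bound_aux a b c : Rabs c <= 48 * Rabs a ->
  Rabs (2 * a * b + 2 * b * c) <= 49 * (a^2 + b^2).
Proof.
  intros H.
  assert (Hc : c^2 <= 2304 * a^2).
  { rewrite <- (pow2_abs c), <- (pow2_abs a).
    pose proof (Rabs_pos c). nra. }
  assert (E1 : 0 <= (48*b - c)^2) by apply pow2_ge_0.
  assert (E2 : 0 <= (48*b + c)^2) by apply pow2_ge_0.
  assert (E3 : 0 <= (a - b)^2) by apply pow2_ge_0.
  assert (E4 : 0 <= (a + b)^2) by apply pow2_ge_0.
  apply Rabs_le. split; nra.
Qed.

Lemma uniq po q1 p1 q2 p2 :
  is_global_solution po q1 p1 -> is_global_solution po q2 p2 ->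
  forall t, q1 t = q2 t /\ p1 t = p2 t.
Proof.
  intros [Dq1 [Dp1 [Q1 P1]]] [Dq2 [Dp2 [Q2 P2]]].
  set (f := fun s => (q1 s - q2 s)^2 + (p1 s - p2 s)^2).
  set (df := fun s => 2 * (q1 s - q2 s) * (p1 s - p2 s)
                     + 2 * (p1 s - p2 s) * (gd (q2 s) - gd (q1 s))).
  assert (Hf : forall s, is_derive f s (df s)).
  { intro s. unfold f, df.
    assert (H1 := Dq1 s). assert (H2 := Dq2 s). assert (H3 := Dp1 s). assert (H4 := Dp2 s).
    rewrite Derive_g in H3, H4.
    auto_derive.
    - repeat split; eexists; eassumption.
    - replace (Derive (fun x : R => q1 x) s) with (p1 s) by (symmetry; apply is_derive_unique; exact H1).
      replace (Derive (fun x : R => q2 x) s) with (p2 s) by (symmetry; apply is_derive_unique; exact H2).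
      replace (Derive (fun x : R => p1 x) s) with (- gd (q1 s)) by (symmetry; apply is_derive_unique; exact H3).
      replace (Derive (fun x : R => p2 x) s) with (- gd (q2 s)) by (symmetry; apply is_derive_unique; exact H4).
      ring. }
  assert (Hb : forall s, Rabs (df s) <= 49 * f s).
  { intro s. unfold df, f. apply bound_aux.
    rewrite <- (Rabs_minus_sym (q2 s)). apply gd_lip. }
  assert (Hnn : forall s, 0 <= f s).
  { intro s. unfold f. pose proof (pow2_ge_0 (q1 s - q2 s)). pose proof (pow2_ge_0 (p1 s - p2 s)). lra. }
  assert (H0 : f 0 = 0).
  { unfold f. rewrite Q1, Q2, P1, P2. ring. }
  assert (Hz : forall t, f t <= 0).
  { intro t. destruct (Rtotal_order t 0) as [Ht|[Ht|Ht]].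
    - set (h := fun s => f s * exp (49 * s)).
      destruct (MVT_gen h t 0 (fun s => (df s + 49 * f s) * exp (49 * s))) as [c [Hc Heq]].
      + intros x _. unfold h. auto_derive.
        * eexists; apply Hf.
        * replace (Derive (fun x0 : R => f x0) x) with (df x) by (symmetry; apply is_derive_unique; apply Hf).
          ring.
      + intros x _. apply cont_of_ex_derive. unfold h. auto_derive.
        eexists; apply Hf.
      + unfold h in Heq. rewrite H0 in Heq.
        assert (0 <= (df c + 49 * f c) * exp (49 * c)).
        { apply Rmult_le_pos; [|left; apply exp_pos].
          pose proof (proj1 (Rabs_le_between _ _) (Hb c)). lra. }
        assert (f t * exp (49 * t) <= 0) by nra.
        pose proof (exp_pos (49 * t)). nra.
    - subst t. lra.
    - set (h := fun s => f s * exp (-49 * s)).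
      destruct (MVT_gen h 0 t (fun s => (df s - 49 * f s) * exp (-49 * s))) as [c [Hc Heq]].
      + intros x _. unfold h. auto_derive.
        * eexists; apply Hf.
        * replace (Derive (fun x0 : R => f x0) x) with (df x) by (symmetry; apply is_derive_unique; apply Hf).
          ring.
      + intros x _. apply cont_of_ex_derive. unfold h. auto_derive.
        eexists; apply Hf.
      + unfold h in Heq. rewrite H0 in Heq.
        assert ((df c - 49 * f c) * exp (-49 * c) <= 0).
        { apply Rmult_le_0_r; [|left; apply exp_pos].
          pose proof (proj1 (Rabs_le_between _ _) (Hb c)). lra. }
        assert (f t * exp (-49 * t) <= 0) by nra.
        pose proof (exp_pos (-49 * t)). nra. }
  intro t. specialize (Hz t). unfold f in Hz.
  pose proof (pow2_ge_0 (q1 t - q2 t)). pose proof (pow2_ge_0 (p1 t - p2 t)).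
  split; nra.
Qed.


Definition uu po th := po^2/2 * (sin th)^2.
Definition al u := sqrt (sqrt (1 - u)).
Definition Dd a := (1 + a) * (1 + a^2).
Definition kk u := sqrt (Dd (al u)) / (4 * sqrt 2 * (al u)^3).
Definition kf po th := kk (uu po th).
Definition Qf po th := po / sqrt 2 * sin th / sqrt (Dd (al (uu po th))).

Lemma uu_lt1 po th : 0 < po < sqrt 2 -> 0 <= uu po th < 1.
Proof.
  intros H. unfold uu.
  assert (po^2 < 2).
  { rewrite <- (sqrt_def 2) by lra. simpl. nra. }
  pose proof (SIN_bound th). split.
  - apply Rmult_le_pos; [nra| apply pow2_ge_0].
  - assert ((sin th)^2 <= 1) by nra. nra.
Qed.

Lemma al_pos u : u < 1 -> 0 < al u.
Proof. intros H. unfold al. apply sqrt_lt_R0, sqrt_lt_R0. lra. Qed.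

Lemma al_pow4 u : u < 1 -> (al u)^4 = 1 - u.
Proof.
  intros H. unfold al.
  replace 4%nat with (2*2)%nat by reflexivity. rewrite pow_mult.
  rewrite (pow2_sqrt (sqrt (1-u))) by (apply sqrt_pos).
  rewrite pow2_sqrt by lra. reflexivity.
Qed.

Lemma al_le1 u : 0 <= u < 1 -> al u <= 1.
Proof.
  intros H. pose proof (al_pos u (proj2 H)). pose proof (al_pow4 u (proj2 H)).
  destruct (Rle_or_lt (al u) 1); auto.
  assert (1 < al u ^ 4).
  { assert (1 < al u ^ 2) by nra. nra. }
  lra.
Qed.

Lemma Qf_deriv po th : 0 < po < sqrt 2 -> is_derive (Qf po) th (po * cos th * kf po th).
Proof.
  intros Hpo. pose proof (uu_lt1 po th Hpo) as Hu.
  unfold Qf, kf, kk, al, Dd, uu in *.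
  auto_derive.
  - replace (1 + - (po * (po * 1) / 2 * (sin th * (sin th * 1)))) with (1 - po ^ 2 / 2 * sin th ^ 2) by field.
    assert (Hw : 0 < 1 - po ^ 2 / 2 * sin th ^ 2) by lra.
    set (w := 1 - po ^ 2 / 2 * sin th ^ 2) in *.
    assert (Hr : 0 < sqrt w) by (apply sqrt_lt_R0; lra).
    assert (Ha : 0 < sqrt (sqrt w)) by (apply sqrt_lt_R0; lra).
    set (a := sqrt (sqrt w)) in *.
    assert (HD : 0 < (1 + a) * (1 + a * (a * 1))) by nra.
    assert (HS : 0 < sqrt ((1 + a) * (1 + a * (a * 1)))) by (apply sqrt_lt_R0; lra).
    repeat split; lra.
  - replace (1 + - (po * (po * 1) / 2 * (sin th * (sin th * 1)))) with (1 - po ^ 2 / 2 * sin th ^ 2) by field.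
    assert (Hw : 0 < 1 - po ^ 2 / 2 * sin th ^ 2) by lra.
    set (w := 1 - po ^ 2 / 2 * sin th ^ 2) in *.
    assert (Hr : 0 < sqrt w) by (apply sqrt_lt_R0; lra).
    set (r := sqrt w) in *.
    assert (Ha : 0 < sqrt r) by (apply sqrt_lt_R0; lra).
    assert (Ear : sqrt r * sqrt r = r) by (apply sqrt_sqrt; lra).
    assert (Erw : r * r = w) by (apply sqrt_sqrt; lra).
    set (a := sqrt r) in *.
    replace ((1 + a) * (1 + a * (a * 1))) with ((1 + a) * (1 + a ^ 2)) by ring.
    assert (HS : 0 < sqrt ((1 + a) * (1 + a ^ 2))) by (apply sqrt_lt_R0; nra).
    assert (ES : sqrt ((1 + a) * (1 + a ^ 2)) * sqrt ((1 + a) * (1 + a ^ 2)) = (1 + a) * (1 + a ^ 2)) by (apply sqrt_sqrt; nra).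
    set (S := sqrt ((1 + a) * (1 + a ^ 2))) in *.
    assert (H2 : 0 < sqrt 2) by (apply sqrt_lt_R0; lra).
    assert (E2 : sqrt 2 * sqrt 2 = 2) by (apply sqrt_sqrt; lra).
    set (s2 := sqrt 2) in *.
    assert (Ew : po ^ 2 * sin th ^ 2 = 2 * (1 - a^4)).
    { replace (a^4) with ((a*a)*(a*a)) by ring. rewrite Ear, Erw. unfold w. field. }
    clearbody w r a S s2. subst r. subst w.
    field_simplify_eq; [|lra].
    replace (S^4) with ((S*S)*(S*S)) by ring. replace (S^2) with (S*S) by ring.
    rewrite ES.
    replace (12 * po ^ 3 * cos th * sin th ^ 2 * a ^ 2 +
      8 * po ^ 3 * cos th * sin th ^ 2 * a + 4 * po ^ 3 * cos th * sin th ^ 2)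
      with (4 * po * cos th * (po^2 * sin th^2) * (3 * a^2 + 2 * a + 1)) by ring.
    rewrite Ew. ring.
Qed.

Lemma sqrt2_pos : 0 < sqrt 2.
Proof. apply sqrt_lt_R0; lra. Qed.

Lemma kk_alt u : u < 1 -> kk u = sqrt (Dd (al u) / (al u)^6) / (4 * sqrt 2).
Proof.
  intros H. pose proof (al_pos u H) as Ha. unfold kk.
  rewrite sqrt_div_alt by (apply pow_lt; lra).
  replace 6%nat with (3 * 2)%nat by reflexivity. rewrite pow_mult.
  rewrite sqrt_pow2 by (apply pow_le; lra).
  pose proof sqrt2_pos. field. repeat split; try (apply pow_nonzero); lra.
Qed.

Lemma al_lt u v : u < v < 1 -> al v < al u.
Proof.
  intros H. unfold al. apply sqrt_lt_1.
  - apply sqrt_pos.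
  - apply sqrt_pos.
  - apply sqrt_lt_1; lra.
Qed.

Lemma E_decr a1 a2 : 0 < a2 < a1 -> Dd a1 / a1^6 < Dd a2 / a2^6.
Proof.
  intros H. unfold Dd.
  assert (P1 : a2 < a1) by lra.
  assert (forall n, (0 < n)%nat -> a2^n < a1^n).
  { intros n Hn. induction n as [|n IH]; [lia|].
    destruct n. { simpl. lra. }
    assert (a2 ^ S n < a1 ^ S n) by (apply IH; lia).
    simpl in *. pose proof (pow_lt a2 (S n) (proj1 H)). simpl in *. nra. }
  assert (0 < a2 ^ 6) by (apply pow_lt; lra).
  assert (0 < a1 ^ 6) by (apply pow_lt; lra).
  apply (Rmult_lt_reg_r (a1^6 * a2^6)); [nra|].
  field_simplify; try lra.
  assert (E : (1 + a2) * (1 + a2^2) * a1^6 - (1 + a1) * (1 + a1^2) * a2^6 =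
     (a1^6 - a2^6) + a1 * a2 * (a1^5 - a2^5) + a1^2 * a2^2 * (a1^4 - a2^4) + a1^3 * a2^3 * (a1^3 - a2^3)) by ring.
  assert (a2^6 < a1^6) by (apply H0; lia).
  assert (a2^5 < a1^5) by (apply H0; lia).
  assert (a2^4 < a1^4) by (apply H0; lia).
  assert (a2^3 < a1^3) by (apply H0; lia).
  assert (0 < a1 * a2) by nra.
  assert (0 < a1^2 * a2^2) by (apply Rmult_lt_0_compat; apply pow_lt; lra).
  assert (0 < a1^3 * a2^3) by (apply Rmult_lt_0_compat; apply pow_lt; lra).
  nra.
Qed.

Lemma Dd_pos a : 0 <= a -> 0 < Dd a.
Proof. intros. unfold Dd. apply Rmult_lt_0_compat; [lra|]. pose proof (pow2_ge_0 a). lra. Qed.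

Lemma kk_lt u v : 0 <= u < v -> v < 1 -> kk u < kk v.
Proof.
  intros H Hv. rewrite !kk_alt by lra.
  pose proof sqrt2_pos.
  apply Rmult_lt_compat_r.
  - apply Rinv_0_lt_compat. lra.
  - apply sqrt_lt_1.
    + pose proof (al_pos u ltac:(lra)). apply Rlt_le. apply Rdiv_lt_0_compat; [apply Dd_pos; lra|apply pow_lt; lra].
    + pose proof (al_pos v Hv). apply Rlt_le. apply Rdiv_lt_0_compat; [apply Dd_pos; lra|apply pow_lt; lra].
    + apply E_decr. split; [apply al_pos; lra| apply al_lt; lra].
Qed.

Lemma kk_le u v : 0 <= u <= v -> v < 1 -> kk u <= kk v.
Proof.
  intros H Hv. destruct (Req_dec u v) as [E|E].
  - subst; lra.
  - left. apply kk_lt; lra.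
Qed.

Lemma sqrt4 : sqrt 4 = 2.
Proof. replace 4 with (2^2) by ring. apply sqrt_pow2. lra. Qed.

Lemma al0 : al 0 = 1.
Proof. unfold al. rewrite Rminus_0_r, !sqrt_1. reflexivity. Qed.

Lemma kk0 : kk 0 = / (2 * sqrt 2).
Proof.
  unfold kk. rewrite al0. unfold Dd.
  replace ((1 + 1) * (1 + 1^2)) with 4 by ring. rewrite sqrt4.
  pose proof sqrt2_pos. field. lra.
Qed.

Lemma kk_ge u : 0 <= u < 1 -> / (2 * sqrt 2) <= kk u.
Proof. intros H. rewrite <- kk0. apply kk_le; lra. Qed.

Lemma kk_ge2 u : u < 1 -> / (4 * sqrt 2 * (al u)^3) <= kk u.
Proof.
  intros H. pose proof (al_pos u H) as Ha. pose proof sqrt2_pos.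
  unfold kk. unfold Rdiv. rewrite <- (Rmult_1_l (/ (4 * sqrt 2 * al u ^ 3))) at 1.
  apply Rmult_le_compat_r.
  - left. apply Rinv_0_lt_compat. apply Rmult_lt_0_compat; [lra|apply pow_lt; lra].
  - rewrite <- sqrt_1. apply sqrt_le_1_alt. unfold Dd.
    pose proof (pow2_ge_0 (al u)). nra.
Qed.

Lemma kk_pos u : 0 <= u < 1 -> 0 < kk u.
Proof.
  intros H. eapply Rlt_le_trans; [|apply kk_ge; auto].
  apply Rinv_0_lt_compat. pose proof sqrt2_pos. lra.
Qed.

Lemma kk_cont u : u < 1 -> continuity_pt kk u.
Proof.
  intros H. apply cont_of_ex_derive. unfold kk, al, Dd.
  auto_derive.
  assert (Hw : 0 < 1 - u) by lra.
  replace (1 + - u) with (1 - u) by ring.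
  assert (Hr : 0 < sqrt (1 - u)) by (apply sqrt_lt_R0; lra).
  assert (Ha : 0 < sqrt (sqrt (1 - u))) by (apply sqrt_lt_R0; lra).
  set (a := sqrt (sqrt (1 - u))) in *.
  assert (HD : 0 < (1 + a) * (1 + a * (a * 1))) by nra.
  pose proof sqrt2_pos.
  repeat split; try lra.
  apply Rmult_integral_contrapositive. split; [lra|].
  apply Rgt_not_eq. repeat apply Rmult_lt_0_compat; lra.
Qed.

Lemma kf_cont_pt po th : 0 < po < sqrt 2 -> continuity_pt (kf po) th.
Proof.
  intros H. unfold kf.
  apply (continuity_pt_comp (uu po) kk th).
  - apply cont_of_ex_derive. unfold uu. auto_derive. auto.
  - apply kk_cont. apply uu_lt1; auto.
Qed.

Lemma kf_cont po th : 0 < po < sqrt 2 -> continuous (kf po) th.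
Proof. intros H. apply continuity_pt_filterlim. apply kf_cont_pt; auto. Qed.

Lemma kf_ge po th : 0 < po < sqrt 2 -> / (2 * sqrt 2) <= kf po th.
Proof. intros H. unfold kf. apply kk_ge, uu_lt1; auto. Qed.

Lemma sin_2PI_plus x : sin (x + 2 * PI) = sin x.
Proof. rewrite sin_plus, sin_2PI, cos_2PI. ring. Qed.

Lemma kf_period po th : kf po (th + 2 * PI) = kf po th.
Proof. unfold kf, uu. rewrite sin_2PI_plus. reflexivity. Qed.

Lemma Qf_sq po th : 0 < po < sqrt 2 -> (Qf po th)^2 = 1 - al (uu po th).
Proof.
  intros H. pose proof (uu_lt1 po th H) as Hu.
  pose proof (al_pos _ (proj2 Hu)) as Ha. pose proof (al_pow4 _ (proj2 Hu)) as E4.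
  pose proof (Dd_pos (al (uu po th)) ltac:(lra)) as HD.
  pose proof (sqrt_lt_R0 _ HD) as HS.
  unfold Qf. pose proof sqrt2_pos.
  replace ((po / sqrt 2 * sin th / sqrt (Dd (al (uu po th)))) ^ 2)
    with (po^2 * sin th ^2 / ((sqrt 2)^2 * (sqrt (Dd (al (uu po th))))^2)).
  2:{ field. split; lra. }
  rewrite !pow2_sqrt by lra.
  replace (po ^ 2 * sin th ^ 2) with (2 * uu po th) by (unfold uu; field).
  set (a := al (uu po th)) in *.
  replace (uu po th) with (1 - a ^ 4) by lra.
  unfold Dd in *. pose proof (pow2_ge_0 a). field. repeat split; lra.
Qed.

Lemma gd_Qf po th : 0 < po < sqrt 2 -> gd (Qf po th) = po * sin th / kf po th.
Proof.
  intros H. pose proof (Qf_sq po th H) as Eq.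
  pose proof (uu_lt1 po th H) as Hu.
  pose proof (al_pos _ (proj2 Hu)) as Ha.
  pose proof (Dd_pos (al (uu po th)) ltac:(lra)) as HD.
  pose proof (sqrt_lt_R0 _ HD) as HS.
  unfold gd. rewrite Eq. rewrite Rmax_right by lra.
  replace (1 - (1 - al (uu po th))) with (al (uu po th)) by ring.
  unfold kf, kk, Qf. pose proof sqrt2_pos.
  assert (E2 : sqrt 2 * sqrt 2 = 2) by (apply sqrt_sqrt; lra).
  field_simplify_eq.
  - rewrite pow2_sqrt by lra. ring.
  - repeat split; try lra; apply pow_nonzero; lra.
Qed.


Lemma Phi_deriv (k : R -> R) : (forall x, continuous k x) ->
  forall x, is_derive (fun x => RInt k 0 x) x (k x).
Proof.
  intros Hc x. apply (is_derive_RInt k (fun x => RInt k 0 x) 0 x).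
  - apply filter_forall. intro b. apply (RInt_correct (V:=R_CompleteNormedModule)). apply (ex_RInt_continuous (V:=R_CompleteNormedModule)).
    intros z _. apply Hc.
  - apply Hc.
Qed.

Lemma RInt_lower (k : R -> R) m : (forall x, continuous k x) -> (forall x, m <= k x) ->
  forall x y, x <= y -> m * (y - x) <= RInt k 0 y - RInt k 0 x.
Proof.
  intros Hc Hm x y Hxy.
  assert (Hex : forall a b, ex_RInt k a b).
  { intros a b. apply (ex_RInt_continuous (V:=R_CompleteNormedModule)). intros z _. apply Hc. }
  assert (E : RInt k 0 x + RInt k x y = RInt k 0 y)
    by (apply (RInt_Chasles (V:=R_CompleteNormedModule)); auto).
  assert (C : RInt (fun _ => m) x y = m * (y - x)).
  { rewrite (RInt_const (V:=R_CompleteNormedModule)). unfold scal; simpl; unfold mult; simpl. change (Rmult (y - x) m = m * (y - x)). ring. }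
  rewrite <- E, <- C. cut (RInt (fun _ => m) x y <= RInt k x y); [lra|].
  apply RInt_le; auto; try apply ex_RInt_const; intros z _; apply Hm.
Qed.

Lemma inv_deriv (Phi k Th : R -> R) m : 0 < m ->
  (forall x, is_derive Phi x (k x)) -> (forall x, m <= k x) ->
  (forall x y, x <= y -> m * (y - x) <= Phi y - Phi x) ->
  (forall t, Phi (Th t) = t) ->
  forall t, is_derive Th t (/ k (Th t)).
Proof.
  intros Hm Hd Hk Hmon Hinv t.
  assert (Lip : forall s, Rabs (Th s - Th t) <= Rabs (s - t) / m).
  { intro s. destruct (Rle_or_lt (Th s) (Th t)) as [H|H].
    - pose proof (Hmon _ _ H). rewrite !Hinv in H0.
      rewrite Rabs_left1 by lra. rewrite Rabs_left1 by nra.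
      apply (Rmult_le_reg_r m); [lra|]. field_simplify; lra.
    - pose proof (Hmon (Th t) (Th s) ltac:(lra)). rewrite !Hinv in H0.
      rewrite Rabs_right by lra. rewrite Rabs_right by nra.
      apply (Rmult_le_reg_r m); [lra|]. field_simplify; lra. }
  set (x := Th t). set (d := k x).
  assert (Hdm : m <= d) by apply Hk.
  apply is_derive_Reals. intros eps Heps.
  set (e' := Rmin (d/2) (eps * d * d / 2)).
  assert (He' : 0 < e').
  { unfold e'. apply Rmin_pos; [lra|]. apply Rmult_lt_0_compat; [|lra].
    apply Rmult_lt_0_compat; [|lra]. apply Rmult_lt_0_compat; lra. }
  destruct (proj1 (is_derive_Reals Phi x d) (Hd x) e' He') as [dl Hdl].
  assert (Hdl' : 0 < m * dl) by (apply Rmult_lt_0_compat; [lra|apply cond_pos]).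
  exists (mkposreal _ Hdl'). intros h Hh0 Hh. simpl in Hh.
  set (y := Th (t + h)).
  assert (Hyx : y - x <> 0).
  { intro E. assert (Phi y = Phi x) by (f_equal; lra). unfold y, x in H.
    rewrite !Hinv in H. lra. }
  assert (Hyx2 : Rabs (y - x) < dl).
  { eapply Rle_lt_trans; [apply Lip|]. replace (t + h - t) with h by ring.
    apply (Rmult_lt_reg_r m); [lra|]. field_simplify; [|lra]. lra. }
  specialize (Hdl (y - x) Hyx Hyx2).
  replace (x + (y - x)) with y in Hdl by ring.
  assert (Ephi : Phi y - Phi x = h) by (unfold y, x; rewrite !Hinv; ring).
  rewrite Ephi in Hdl.
  set (r := h / (y - x)) in *.
  assert (Hr : d / 2 < r).
  { apply Rabs_def2 in Hdl. assert (e' <= d/2) by apply Rmin_l. lra. }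
  fold x.
  replace ((y - x) / h - / d) with ((d - r) / (r * d)).
  2:{ unfold r. field. repeat split; try lra. }
  unfold Rdiv. rewrite Rabs_mult. rewrite Rabs_inv. rewrite (Rabs_right (r * d)) by nra.
  assert (Rabs (d - r) < e') by (rewrite Rabs_minus_sym; exact Hdl).
  assert (e' <= eps * d * d / 2) by apply Rmin_r.
  apply (Rmult_lt_reg_r (r * d)); [nra|].
  rewrite Rmult_assoc, Rinv_l by nra. rewrite Rmult_1_r.
  assert (eps * d * d / 2 < eps * (r * d)).
  { apply (Rmult_lt_reg_r (2 / d)). { apply Rdiv_lt_0_compat; lra. }
    field_simplify; try lra. nra. }
  lra.
Qed.


Definition Per po := RInt (kf po) 0 (2 * PI).

Section Fixed.
Variable po : R.
Hypothesis Hpo : 0 < po < sqrt 2.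

Let m := / (2 * sqrt 2).
Let Phi x := RInt (kf po) 0 x.

Lemma m_pos : 0 < m.
Proof. unfold m. pose proof sqrt2_pos. apply Rinv_0_lt_compat. lra. Qed.

Lemma Phi_d x : is_derive Phi x (kf po x).
Proof. apply Phi_deriv. intro; apply kf_cont; auto. Qed.

Lemma Phi_low x y : x <= y -> m * (y - x) <= Phi y - Phi x.
Proof. apply RInt_lower. intro; apply kf_cont; auto. intro; apply kf_ge; auto. Qed.

Lemma Phi0 : Phi 0 = 0.
Proof. unfold Phi. apply (RInt_point (V:=R_CompleteNormedModule)). Qed.

Lemma Phi_lt x y : x < y -> Phi x < Phi y.
Proof. intros H. pose proof (Phi_low x y ltac:(lra)). pose proof m_pos. nra. Qed.

Lemma Phi_inj x y : Phi x = Phi y -> x = y.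
Proof.
  intros H. destruct (Rtotal_order x y) as [H1|[H1|H1]]; auto.
  - apply Phi_lt in H1. lra.
  - apply Phi_lt in H1. lra.
Qed.

Lemma Phi_cont : continuity Phi.
Proof. intro x. apply cont_of_ex_derive. eexists. apply Phi_d. Qed.

Lemma Phi_surj t : {x | Phi x = t}.
Proof.
  pose proof m_pos.
  destruct (IVT_gen Phi (- Rabs t / m) (Rabs t / m) t Phi_cont) as [x [_ Hx]].
  - pose proof (Phi_low 0 (Rabs t / m)) as H1.
    pose proof (Phi_low (- Rabs t / m) 0) as H2.
    pose proof (Rabs_pos t). pose proof (Rle_abs t). pose proof (Rabs_maj2 t).
    assert (0 <= Rabs t / m) by (apply Rdiv_le_0_compat; lra).
    specialize (H1 ltac:(lra)). specialize (H2 ltac:(lra)).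
    rewrite Phi0 in H1, H2.
    replace (m * (Rabs t / m - 0)) with (Rabs t) in H1 by (field; lra).
    replace (m * (0 - - Rabs t / m)) with (Rabs t) in H2 by (field; lra).
    split.
    + apply Rle_trans with (Phi (- Rabs t / m)); [apply Rmin_l|lra].
    + apply Rle_trans with (Phi (Rabs t / m)); [lra|apply Rmax_r].
  - exists x. exact Hx.
Qed.

Definition Th t := proj1_sig (Phi_surj t).

Lemma Th_inv t : Phi (Th t) = t.
Proof. unfold Th. destruct (Phi_surj t); auto. Qed.

Lemma Th_d t : is_derive Th t (/ kf po (Th t)).
Proof.
  apply (inv_deriv Phi (kf po) Th m m_pos Phi_d).
  - intro; apply kf_ge; auto.
  - apply Phi_low.
  - apply Th_inv.
Qed.

Lemma Th0 : Th 0 = 0.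
Proof. apply Phi_inj. rewrite Th_inv, Phi0. reflexivity. Qed.

Lemma Phi_shift x : Phi (x + 2 * PI) = Phi x + Per po.
Proof.
  set (h := fun x => Phi (x + 2 * PI) - Phi x).
  assert (Hd : forall x, is_derive h x zero).
  { intro z. unfold h.
    replace (@zero R_NormedModule) with (kf po (z + 2 * PI) * 1 - kf po z).
    2:{ rewrite kf_period. simpl. unfold zero; simpl. ring. }
    apply (is_derive_minus (fun x => Phi (x + 2 * PI)) Phi z).
    - replace (kf po (z + 2 * PI) * 1) with (scal 1 (kf po (z + 2 * PI))).
      2:{ unfold scal; simpl; unfold mult; simpl. ring. }
      apply (is_derive_comp Phi (fun x => x + 2 * PI)).
      + apply Phi_d.
      + auto_derive; auto.
    - apply Phi_d. }
  assert (E : h x = h 0).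
  { destruct (Rtotal_order x 0) as [H|[H|H]].
    - apply (eq_is_derive h x 0); auto.
    - subst; auto.
    - symmetry. apply (eq_is_derive h 0 x); auto. }
  unfold h in E. rewrite Rplus_0_l, Phi0 in E.
  unfold Per. fold (Phi (2 * PI)). lra.
Qed.

Definition qs t := Qf po (Th t).
Definition ps t := po * cos (Th t).

Lemma kf_ne x : kf po x <> 0.
Proof. pose proof (kf_ge po x Hpo). pose proof m_pos. unfold m in *. lra. Qed.

Lemma sol_is : is_global_solution po qs ps.
Proof.
  split; [|split; [|split]].
  - intro t. unfold qs, ps.
    replace (po * cos (Th t)) with (scal (/ kf po (Th t)) (po * cos (Th t) * kf po (Th t))).
    2:{ unfold scal; simpl; unfold mult; simpl. field. apply kf_ne. }
    apply (is_derive_comp (Qf po) Th).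
    + apply Qf_deriv; auto.
    + apply Th_d.
  - intro t. unfold ps, qs. rewrite Derive_g, gd_Qf by auto.
    replace (- (po * sin (Th t) / kf po (Th t))) with (scal (/ kf po (Th t)) (po * (- sin (Th t)))).
    2:{ unfold scal; simpl; unfold mult; simpl. field. apply kf_ne. }
    apply (is_derive_comp (fun x => po * cos x) Th).
    + auto_derive; auto. ring.
    + apply Th_d.
  - unfold qs. rewrite Th0. unfold Qf. rewrite sin_0. field.
    split; [pose proof sqrt2_pos; lra|].
    apply Rgt_not_eq. apply sqrt_lt_R0. apply Dd_pos.
    left. apply al_pos. apply uu_lt1; auto.
  - unfold ps. rewrite Th0, cos_0. ring.
Qed.

Lemma Th_shift t : Th (t + Per po) = Th t + 2 * PI.
Proof. apply Phi_inj. rewrite Phi_shift, !Th_inv. reflexivity. Qed.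

Lemma Per_pos : 0 < Per po.
Proof.
  pose proof (Phi_lt 0 (2 * PI)). pose proof PI_RGT_0.
  pose proof (Phi_shift 0). rewrite Rplus_0_l, Phi0 in H1. fold Phi in H. rewrite Phi0 in H. lra.
Qed.

Lemma Qf_pi2_pos : 0 < Qf po (PI / 2).
Proof.
  unfold Qf. rewrite sin_PI2. pose proof sqrt2_pos.
  apply Rdiv_lt_0_compat.
  - apply Rmult_lt_0_compat; [apply Rdiv_lt_0_compat; lra|lra].
  - apply sqrt_lt_R0. apply Dd_pos. left. apply al_pos. apply uu_lt1; auto.
Qed.

Lemma Qf_eq_pi2 x : Qf po x = Qf po (PI / 2) -> sin x = 1.
Proof.
  intros E.
  assert (E2 : al (uu po x) = al (uu po (PI/2))).
  { pose proof (Qf_sq po x Hpo). pose proof (Qf_sq po (PI/2) Hpo). rewrite E in H. lra. }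
  assert (E3 : uu po x = uu po (PI/2)).
  { pose proof (al_pow4 (uu po x) (proj2 (uu_lt1 po x Hpo))).
    pose proof (al_pow4 (uu po (PI/2)) (proj2 (uu_lt1 po (PI/2) Hpo))).
    rewrite E2 in H. lra. }
  unfold uu in E3. rewrite sin_PI2 in E3.
  assert (Hs : sin x ^ 2 = 1).
  { assert (0 < po^2 / 2) by (pose proof (pow_lt po 2 (proj1 Hpo)); lra).
    apply (Rmult_eq_reg_l (po^2/2)); lra. }
  assert (Hp : 0 < sin x).
  { pose proof Qf_pi2_pos. rewrite <- E in H. unfold Qf in H.
    pose proof sqrt2_pos.
    assert (0 < sqrt (Dd (al (uu po x)))).
    { apply sqrt_lt_R0. apply Dd_pos. left. apply al_pos. apply uu_lt1; auto. }
    assert (0 < po / sqrt 2) by (apply Rdiv_lt_0_compat; lra).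
    destruct (Rlt_or_le 0 (sin x)); auto.
    exfalso. assert (po / sqrt 2 * sin x <= 0) by nra.
    assert (po / sqrt 2 * sin x / sqrt (Dd (al (uu po x))) <= 0).
    { unfold Rdiv at 2. apply Rmult_le_0_r. lra. left. apply Rinv_0_lt_compat. lra. }
    lra. }
  nra.
Qed.

Lemma sin_lt1 x : PI / 2 < x < 5 * PI / 2 -> sin x < 1.
Proof.
  intros H. set (y := x - PI / 2).
  replace x with (y + PI / 2) by (unfold y; ring).
  rewrite sin_plus, sin_PI2, cos_PI2.
  replace y with (2 * (y / 2)) by field. rewrite cos_2a_sin.
  assert (0 < sin (y / 2)) by (apply sin_gt_0; unfold y; lra).
  nra.
Qed.

Lemma sol_min_period : is_min_period qs (Per po).
Proof.
  split; [apply Per_pos|split].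
  - intro t. unfold qs. rewrite Th_shift. unfold Qf, uu. rewrite sin_2PI_plus. reflexivity.
  - intros T' [HT1 HT2] HP.
    set (t0 := Phi (PI / 2)).
    assert (E0 : Th t0 = PI / 2) by (apply Phi_inj; rewrite Th_inv; reflexivity).
    specialize (HP t0). unfold qs in HP. rewrite E0 in HP.
    set (x := Th (t0 + T')) in HP.
    assert (Ex : Phi x = t0 + T') by apply Th_inv.
    assert (H5 : Phi (PI / 2 + 2 * PI) = t0 + Per po) by (rewrite Phi_shift; reflexivity).
    assert (PI / 2 < x).
    { destruct (Rle_or_lt x (PI / 2)) as [H|H]; auto.
      destruct H as [H|H]. apply Phi_lt in H. fold t0 in H. lra. subst x. rewrite H in Ex. fold t0 in Ex. lra. }
    assert (x < 5 * PI / 2).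
    { destruct (Rlt_or_le x (5 * PI / 2)) as [H'|H']; auto.
      replace (5 * PI / 2) with (PI / 2 + 2 * PI) in H' by field.
      destruct H' as [H'|H']. apply Phi_lt in H'. lra. rewrite <- H' in Ex. lra. }
    pose proof (Qf_eq_pi2 x HP). pose proof (sin_lt1 x). lra.
Qed.

End Fixed.


Lemma RInt_plus_const (g : R -> R) a b e : ex_RInt g a b ->
  RInt (fun x => g x + e) a b = RInt g a b + (b - a) * e.
Proof.
  intros H.
  assert (E := RInt_plus (V:=R_CompleteNormedModule) g (fun _ => e) a b H (ex_RInt_const _ _ _)).
  simpl in E. unfold plus in E; simpl in E. rewrite E.
  rewrite (RInt_const (V:=R_CompleteNormedModule)). unfold scal; simpl; unfold mult; simpl. reflexivity.
Qed.

Lemma RInt_close (f g : R -> R) a b e : a <= b -> ex_RInt f a b -> ex_RInt g a b ->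
  (forall x, a < x < b -> Rabs (f x - g x) <= e) ->
  Rabs (RInt f a b - RInt g a b) <= (b - a) * e.
Proof.
  intros Hab Hf Hg H.
  assert (Hgp : ex_RInt (fun x => g x + e) a b).
  { apply (ex_RInt_plus (V:=R_NormedModule) g (fun _ => e)); auto. apply ex_RInt_const. }
  assert (Hfp : ex_RInt (fun x => f x + e) a b).
  { apply (ex_RInt_plus (V:=R_NormedModule) f (fun _ => e)); auto. apply ex_RInt_const. }
  assert (H1 : RInt f a b <= RInt (fun x => g x + e) a b).
  { apply RInt_le; auto. intros x Hx. specialize (H x Hx). apply Rabs_le_between in H. lra. }
  assert (H2 : RInt g a b <= RInt (fun x => f x + e) a b).
  { apply RInt_le; auto. intros x Hx. specialize (H x Hx). apply Rabs_le_between in H. lra. }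
  rewrite RInt_plus_const in H1, H2 by auto.
  apply Rabs_le_between. lra.
Qed.

Lemma exR po a b : 0 < po < sqrt 2 -> ex_RInt (kf po) a b.
Proof. intros H. apply (ex_RInt_continuous (V:=R_CompleteNormedModule)). intros; apply kf_cont; auto. Qed.

Lemma m_val : 2 * PI * / (2 * sqrt 2) = PI / sqrt 2.
Proof. pose proof sqrt2_pos. field. lra. Qed.

Lemma Per_ge po : 0 < po < sqrt 2 -> PI / sqrt 2 <= Per po.
Proof.
  intros H. rewrite <- m_val. unfold Per.
  replace (2 * PI * / (2 * sqrt 2)) with (RInt (fun _ => / (2 * sqrt 2)) 0 (2 * PI)).
  2:{ rewrite (RInt_const (V:=R_CompleteNormedModule)). unfold scal; simpl; unfold mult; simpl.
      change (Rmult (2 * PI - 0) (/ (2 * sqrt 2)) = 2 * PI * / (2 * sqrt 2)). ring. }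
  apply RInt_le.
  - pose proof PI_RGT_0. lra.
  - apply ex_RInt_const.
  - apply exR; auto.
  - intros x _. apply kf_ge; auto.
Qed.

Lemma uu_le a b th : 0 < a < b -> uu a th <= uu b th.
Proof. intros H. unfold uu. pose proof (pow2_ge_0 (sin th)). apply Rmult_le_compat_r; [lra|]. nra. Qed.

Lemma uu_lt a b th : 0 < a < b -> sin th <> 0 -> uu a th < uu b th.
Proof.
  intros H Hs. unfold uu. assert (0 < sin th ^ 2) by (apply pow2_gt_0; auto).
  apply Rmult_lt_compat_r; [lra|]. nra.
Qed.

Lemma Per_incr a b : 0 < a < sqrt 2 -> 0 < b < sqrt 2 -> a < b -> Per a < Per b.
Proof.
  intros Ha Hb Hab. unfold Per. pose proof PI_RGT_0.
  rewrite <- (RInt_Chasles (V:=R_CompleteNormedModule) (kf a) 0 PI (2 * PI)) by (apply exR; auto).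
  rewrite <- (RInt_Chasles (V:=R_CompleteNormedModule) (kf b) 0 PI (2 * PI)) by (apply exR; auto).
  simpl. unfold plus; simpl.
  apply Rplus_lt_le_compat.
  - apply RInt_lt; auto.
    + intros; apply kf_cont; auto.
    + intros; apply kf_cont; auto.
    + intros x Hx. unfold kf. apply kk_lt.
      * split; [apply uu_lt1; auto|]. apply uu_lt; [lra|]. apply Rgt_not_eq. apply sin_gt_0; lra.
      * apply uu_lt1; auto.
  - apply RInt_le; try lra; try (apply exR; auto).
    intros x Hx. unfold kf. apply kk_le.
    + split; [apply uu_lt1; auto|]. apply uu_le; lra.
    + apply uu_lt1; auto.
Qed.

Lemma Per_cont po0 : 0 < po0 < sqrt 2 -> continuous Per po0.
Proof.
  intros H0. apply continuity_pt_filterlim.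
  intros eps Heps.
  pose proof sqrt2_pos. pose proof PI_RGT_0.
  set (b0 := (po0 + sqrt 2) / 2).
  assert (Hb0 : po0 < b0 < sqrt 2) by (unfold b0; lra).
  set (U := b0 ^ 2 / 2).
  assert (HU : U < 1).
  { unfold U. assert (b0^2 < 2). { rewrite <- (pow2_sqrt 2) by lra. simpl. nra. } lra. }
  assert (Hc : forall x, 0 <= x <= U -> continuity_pt kk x) by (intros; apply kk_cont; lra).
  assert (He' : 0 < eps / (4 * PI)) by (apply Rdiv_lt_0_compat; lra).
  destruct (Heine_cor2 Hc (mkposreal _ He')) as [d1 Hd1]. simpl in Hd1.
  set (d := Rmin (Rmin (b0 - po0) po0) (d1 / 2)).
  assert (Hd : 0 < d).
  { unfold d. apply Rmin_pos; [apply Rmin_pos|]; try lra. pose proof (cond_pos d1). lra. }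
  exists d. split; auto.
  intros po [_ Hpo]. unfold R_dist in *.
  assert (Hd_1 : d <= b0 - po0) by (unfold d; eapply Rle_trans; [apply Rmin_l|apply Rmin_l]).
  assert (Hd_2 : d <= po0) by (unfold d; eapply Rle_trans; [apply Rmin_l|apply Rmin_r]).
  assert (Hd_3 : d <= d1 / 2) by (unfold d; apply Rmin_r).
  apply Rabs_def2 in Hpo.
  assert (Hp : 0 < po < sqrt 2) by lra.
  unfold Per.
  eapply Rle_lt_trans.
  { apply (RInt_close (kf po) (kf po0) 0 (2 * PI) (eps / (4 * PI))); try lra; try (apply exR; auto).
    intros x _. unfold kf. left. apply Hd1.
    - split; [apply uu_lt1; auto|]. unfold U. eapply Rle_trans; [apply uu_le with (b := b0); lra|].
      unfold uu. pose proof (SIN_bound x). pose proof (pow2_ge_0 b0).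
      assert (sin x ^ 2 <= 1) by nra. nra.
    - split; [apply uu_lt1; auto|]. unfold U. eapply Rle_trans; [apply uu_le with (b := b0); lra|].
      unfold uu. pose proof (SIN_bound x). pose proof (pow2_ge_0 b0).
      assert (sin x ^ 2 <= 1) by nra. nra.
    - unfold uu. pose proof (SIN_bound x). assert (0 <= sin x ^ 2 <= 1) by (split; [apply pow2_ge_0|nra]).
      replace (po ^ 2 / 2 * sin x ^ 2 - po0 ^ 2 / 2 * sin x ^ 2) with
        ((po - po0) * ((po + po0) / 2 * sin x ^ 2)) by field.
      rewrite Rabs_mult.
      assert (Rabs ((po + po0) / 2 * sin x ^ 2) <= 2).
      { assert (sqrt 2 < 2) by (pose proof (sqrt_lt_1 2 4 ltac:(lra) ltac:(lra) ltac:(lra)) as HH; rewrite sqrt4 in HH; exact HH).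
        rewrite Rabs_right by nra. nra. }
      assert (Rabs (po - po0) < d1 / 2) by (apply Rabs_def1; lra).
      pose proof (Rabs_pos (po - po0)). pose proof (Rabs_pos ((po + po0) / 2 * sin x ^ 2)). nra. }
  replace ((2 * PI - 0) * (eps / (4 * PI))) with (eps / 2) by (field; lra).
  lra.
Qed.

Lemma sin2_le1 x : 0 <= sin x ^ 2 <= 1.
Proof.
  pose proof (sin2_cos2 x). unfold Rsqr in H. pose proof (pow2_ge_0 (cos x)). pose proof (pow2_ge_0 (sin x)).
  simpl in *. lra.
Qed.

Lemma sqrt2_gt1 : 1 < sqrt 2.
Proof. pose proof (sqrt_lt_1 1 2 ltac:(lra) ltac:(lra) ltac:(lra)) as H. rewrite sqrt_1 in H. exact H. Qed.

Lemma Per_glb : is_glb_Rbar (fun y => exists po, 0 < po < sqrt 2 /\ y = Per po) (Finite (PI / sqrt 2)).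
Proof.
  pose proof sqrt2_gt1. pose proof PI_RGT_0.
  split.
  - intros y [po [Hy ->]]. change (PI / sqrt 2 <= Per po). apply Per_ge; auto.
  - intros b Hb. destruct b as [b| |].
    + change (b <= PI / sqrt 2). apply Rnot_lt_le. intro Hlt.
      set (eps := b - PI / sqrt 2).
      assert (He : 0 < eps / (4 * PI)) by (apply Rdiv_lt_0_compat; unfold eps; lra).
      destruct (kk_cont 0 ltac:(lra) _ He) as [dl [Hdl Hk]].
      set (po := Rmin 1 (sqrt dl) / 2).
      assert (Hs : 0 < sqrt dl) by (apply sqrt_lt_R0; lra).
      assert (Hpo : 0 < po <= 1/2).
      { unfold po. split. apply Rdiv_lt_0_compat; [apply Rmin_pos|]; lra.
        pose proof (Rmin_l 1 (sqrt dl)). lra. }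
      assert (Hpo2 : po ^ 2 < dl).
      { assert (po <= sqrt dl / 2) by (unfold po; pose proof (Rmin_r 1 (sqrt dl)); lra).
        assert (po^2 <= (sqrt dl / 2)^2) by (apply pow_incr; lra).
        replace ((sqrt dl / 2)^2) with ((sqrt dl)^2 / 4) in H2 by field.
        rewrite pow2_sqrt in H2 by lra. lra. }
      assert (Hp : 0 < po < sqrt 2) by lra.
      assert (HP : Per po <= PI / sqrt 2 + eps / 2).
      { assert (Hc := RInt_close (kf po) (fun _ => kk 0) 0 (2 * PI) (eps / (4 * PI))).
        assert (C : RInt (fun _ => kk 0) 0 (2 * PI) = PI / sqrt 2).
        { rewrite (RInt_const (V:=R_CompleteNormedModule)). rewrite kk0. rewrite <- m_val.
          unfold scal; simpl; unfold mult; simpl.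
          change (Rmult (2 * PI - 0) (/ (2 * sqrt 2)) = 2 * PI * / (2 * sqrt 2)). ring. }
        rewrite C in Hc.
        replace ((2 * PI - 0) * (eps / (4 * PI))) with (eps / 2) in Hc by (field; lra).
        unfold Per.
        assert (HH : Rabs (RInt (kf po) 0 (2 * PI) - PI / sqrt 2) <= eps / 2).
        { apply Hc; [lra| apply exR; exact Hp | apply ex_RInt_const |].
          intros x _. unfold kf. cbv beta.
          destruct (Req_dec (uu po x) 0) as [E|E].
          - rewrite E. rewrite Rminus_diag, Rabs_R0. lra.
          - left. apply Hk. split.
            + split; [exact I|auto].
            + change (Rabs (uu po x - 0) < dl). rewrite Rminus_0_r.
              pose proof (uu_lt1 po x Hp). rewrite Rabs_right by lra.
              unfold uu. pose proof (sin2_le1 x).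
              assert (0 <= po ^ 2 / 2) by (pose proof (pow2_ge_0 po); lra).
              assert (po ^ 2 / 2 * sin x ^ 2 <= po ^ 2 / 2 * 1) by (apply Rmult_le_compat_l; lra).
              lra. }
        apply Rabs_le_between in HH. lra. }
      specialize (Hb (Per po) (ex_intro _ po (conj Hp eq_refl))). change (b <= Per po) in Hb.
      unfold eps in HP. lra.
    + apply (Hb (Per 1)). exists 1. split; [lra|]. split; lra.
    + exact I.
Qed.

Lemma sin_sq_le y : Rabs y < PI -> sin y ^ 2 <= y ^ 2.
Proof.
  intros H. apply Rabs_def2 in H.
  destruct (Rtotal_order y 0) as [Hy|[Hy|Hy]].
  - assert (0 < - y) by lra.
    pose proof (sin_gt_0 (- y) ltac:(lra) ltac:(lra)).
    pose proof (sin_lt_x (- y) ltac:(lra)).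
    rewrite sin_neg in *. nra.
  - subst. rewrite sin_0. lra.
  - pose proof (sin_gt_0 y ltac:(lra) ltac:(lra)).
    pose proof (sin_lt_x y ltac:(lra)). nra.
Qed.

Lemma pos_root_eq x y : 0 < x -> 0 < y -> x ^ 2 = y ^ 2 -> x = y.
Proof.
  intros Hx Hy E. destruct (Rtotal_order x y) as [H|[H|H]]; auto; nra.
Qed.

Lemma Per_low po : 0 < po < sqrt 2 -> / (4 * al (po ^ 2 - 1)) <= Per po.
Proof.
  intros Hp. pose proof sqrt2_pos. pose proof PI_RGT_0. pose proof PI2_1.
  assert (Hpo2 : po ^ 2 < 2).
  { rewrite <- (pow2_sqrt 2) by lra. simpl. nra. }
  set (eps := 1 - po ^ 2 / 2).
  assert (Heps : 0 < eps < 1) by (unfold eps; pose proof (pow_lt po 2 (proj1 Hp)); lra).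
  set (s := al (po ^ 2 - 1)).
  assert (Hs : 0 < s) by (apply al_pos; lra).
  assert (Hs4 : s ^ 4 = 2 * eps) by (unfold s, eps; rewrite al_pow4 by lra; field).
  set (d := sqrt eps).
  assert (Hd : 0 < d) by (apply sqrt_lt_R0; lra).
  assert (Hd2 : d ^ 2 = eps) by (apply pow2_sqrt; lra).
  assert (Hd1 : d < 1).
  { destruct (Rlt_or_le d 1); auto. nra. }
  set (a := PI / 2 - d). set (b := PI / 2 + d).
  assert (Hex : forall x y, ex_RInt (kf po) x y) by (intros; apply exR; auto).
  assert (Hkp : forall x, 0 <= kf po x).
  { intro x. pose proof (kf_ge po x Hp). assert (0 < / (2 * sqrt 2)) by (apply Rinv_0_lt_compat; lra). lra. }
  assert (E1 : RInt (kf po) 0 (2 * PI) = RInt (kf po) 0 a + RInt (kf po) a b + RInt (kf po) b (2 * PI)).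
  { assert (C1 : RInt (kf po) 0 a + RInt (kf po) a b = RInt (kf po) 0 b)
      by (apply (RInt_Chasles (V:=R_CompleteNormedModule)); auto).
    assert (C2 : RInt (kf po) 0 b + RInt (kf po) b (2 * PI) = RInt (kf po) 0 (2 * PI))
      by (apply (RInt_Chasles (V:=R_CompleteNormedModule)); auto).
    lra. }
  assert (I1 : 0 <= RInt (kf po) 0 a) by (apply RInt_ge_0; auto; unfold a; lra).
  assert (I3 : 0 <= RInt (kf po) b (2 * PI)) by (apply RInt_ge_0; auto; unfold b; lra).
  assert (I2 : RInt (fun _ => / (4 * sqrt 2 * s ^ 3)) a b <= RInt (kf po) a b).
  { apply RInt_le; auto; [unfold a, b; lra| apply ex_RInt_const |].
    intros x Hx. unfold kf.
    pose proof (uu_lt1 po x Hp) as Hu.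
    eapply Rle_trans; [|apply kk_ge2; lra].
    set (A := al (uu po x)).
    assert (HA : 0 < A) by (apply al_pos; lra).
    assert (HA4 : A ^ 4 = 1 - uu po x) by (apply al_pow4; lra).
    assert (Hle : 1 - uu po x <= 2 * eps).
    { unfold uu. pose proof (sin2_cos2 x). unfold Rsqr in H2.
      assert (Hy : Rabs (PI / 2 - x) < PI) by (apply Rabs_def1; unfold a, b in Hx; lra).
      pose proof (sin_sq_le _ Hy).
      assert ((PI / 2 - x) ^ 2 <= d ^ 2).
      { assert (Rabs (PI / 2 - x) < d) by (apply Rabs_def1; unfold a, b in Hx; lra).
        rewrite <- (pow2_abs (PI/2 - x)). pose proof (Rabs_pos (PI/2 - x)). nra. }
      rewrite sin_shift in H3.
      pose proof (sin2_le1 x).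
      replace (po ^ 2 / 2) with (1 - eps) by (unfold eps; ring).
      simpl in *. nra. }
    assert (HAs : A <= s).
    { destruct (Rle_or_lt A s); auto.
      assert (s ^ 2 < A ^ 2) by nra. assert (s ^ 4 < A ^ 4) by (simpl in *; nra). lra. }
    apply Rinv_le_contravar.
    - apply Rmult_lt_0_compat; [lra| apply pow_lt; lra].
    - apply Rmult_le_compat_l; [lra|]. apply pow_incr. lra. }
  assert (C : RInt (fun _ => / (4 * sqrt 2 * s ^ 3)) a b = / (4 * s)).
  { rewrite (RInt_const (V:=R_CompleteNormedModule)). unfold scal; simpl; unfold mult; simpl.
    change (Rmult (b - a) (/ (4 * sqrt 2 * s ^ 3)) = / (4 * s)).
    assert (Ed : d = s ^ 2 / sqrt 2).
    { apply pos_root_eq; auto.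
      - apply Rdiv_lt_0_compat; [apply pow_lt|]; lra.
      - rewrite Hd2. replace ((s ^ 2 / sqrt 2) ^ 2) with (s ^ 4 / (sqrt 2) ^ 2) by (field; lra).
        rewrite pow2_sqrt by lra. rewrite Hs4. field. }
    unfold a, b. replace (PI / 2 + d - (PI / 2 - d)) with (2 * d) by ring.
    rewrite Ed. assert (E2 : sqrt 2 * sqrt 2 = 2) by (apply sqrt_sqrt; lra).
    replace (2 * (s ^ 2 / sqrt 2) * / (4 * sqrt 2 * s ^ 3)) with (2 * s ^ 2 / (4 * (sqrt 2 * sqrt 2) * s ^ 3)) by (field; lra).
    rewrite E2. field. lra. }
  unfold Per. rewrite E1. rewrite C in I2. lra.
Qed.

Lemma Per_lim : filterlim Per (at_left (sqrt 2)) (Rbar_locally p_infty).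
Proof.
  intros P [M HM]. pose proof sqrt2_pos. pose proof sqrt2_gt1.
  assert (Hs32 : sqrt 2 < 3 / 2).
  { assert (E : sqrt 2 ^ 2 = 2) by (apply pow2_sqrt; lra). nra. }
  set (eta := / (4 * (Rabs M + 1))).
  assert (Heta : 0 < eta) by (unfold eta; pose proof (Rabs_pos M); apply Rinv_0_lt_compat; lra).
  assert (He : 0 < Rmin 1 (eta ^ 4 / 3)).
  { apply Rmin_pos; [lra|]. pose proof (pow_lt eta 4 Heta). lra. }
  exists (mkposreal _ He). intros y Hy Hlt. apply HM.
  change (Rabs (y + - sqrt 2) < Rmin 1 (eta ^ 4 / 3)) in Hy.
  apply Rabs_def2 in Hy.
  pose proof (Rmin_l 1 (eta ^ 4 / 3)). pose proof (Rmin_r 1 (eta ^ 4 / 3)).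
  assert (Hy0 : 0 < y < sqrt 2) by lra.
  pose proof (Per_low y Hy0) as HL.
  set (s := al (y ^ 2 - 1)) in HL.
  assert (Hy2 : y ^ 2 < 2) by (rewrite <- (pow2_sqrt 2) by lra; simpl; nra).
  assert (Hs : 0 < s) by (apply al_pos; lra).
  assert (Hs4 : s ^ 4 = 2 - y ^ 2) by (unfold s; rewrite al_pow4 by lra; ring).
  assert (Hs4' : s ^ 4 < eta ^ 4).
  { rewrite Hs4. assert (E : sqrt 2 ^ 2 = 2) by (apply pow2_sqrt; lra).
    replace (2 - y ^ 2) with ((sqrt 2 - y) * (sqrt 2 + y)) by (replace ((sqrt 2 - y) * (sqrt 2 + y)) with (sqrt 2 ^ 2 - y ^ 2) by ring; rewrite E; ring).
    assert (A1 : 0 < sqrt 2 - y < eta ^ 4 / 3) by lra.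
    assert (A2 : 0 < sqrt 2 + y < 3) by lra.
    assert ((sqrt 2 - y) * (sqrt 2 + y) < (eta ^ 4 / 3) * 3) by nra.
    lra. }
  assert (Hse : s < eta).
  { destruct (Rlt_or_le s eta); auto. assert (eta ^ 4 <= s ^ 4) by (apply pow_incr; lra). lra. }
  assert (Hinv : / (4 * eta) < / (4 * s)) by (apply Rinv_lt_contravar; nra).
  replace (/ (4 * eta)) with (Rabs M + 1) in Hinv.
  2:{ unfold eta. pose proof (Rabs_pos M). field. lra. }
  pose proof (Rle_abs M). lra.
Qed.


Theorem lemma5p14 :
  exists T : R -> R,
    (forall po : R, 0 < po < sqrt 2 ->
       (exists q p : R -> R, is_global_solution po q p) /\
       (forall q p : R -> R, is_global_solution po q p -> is_min_period q (T po))) /\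
    (forall po : R, 0 < po < sqrt 2 -> continuous T po) /\
    (forall a b : R, 0 < a < sqrt 2 -> 0 < b < sqrt 2 -> a < b -> T a < T b) /\
    is_glb_Rbar (fun y : R => exists po : R, 0 < po < sqrt 2 /\ y = T po)
                (Finite (PI / sqrt 2)) /\
    filterlim T (at_left (sqrt 2)) (Rbar_locally p_infty).
Proof.
  exists Per. split; [|split; [|split; [|split]]].
  - intros po Hpo. split.
    + exists (qs po Hpo), (ps po Hpo). apply sol_is.
    + intros q p Hs. destruct (sol_min_period po Hpo) as [H1 [H2 H3]].
      assert (E : forall t, q t = qs po Hpo t)
        by (intro t; apply (uniq po q p (qs po Hpo) (ps po Hpo) Hs (sol_is po Hpo) t)).
      split; auto. split.
      * intro t. rewrite !E. apply H2.
      * intros T' HT HP. apply (H3 T' HT). intro t. rewrite <- !E. apply HP.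
  - intros; apply Per_cont; auto.
  - intros; apply Per_incr; auto.
  - apply Per_glb.
  - apply Per_lim.
Qed.
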